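(* Let $X$ be the Banach space whose underlying set is $\ell_2$ (real square-summable sequences) with the norm $\|x\|=\max\{\|x\|_\infty,\|x\|_2/\sqrt{2}\}$, and let $\theta$ be its origin and $B(\theta,r)$ the closed ball of radius $r$ about $\theta$ in this norm. Let $$A=B(\theta,1)\cap\{x=\{x_n\}_{n\ge1}\in X : x_1=1,\ x_i\ge 0\text{ for all } i\ge1\},$$ $$B=B(\theta,2)\cap\{x=\{x_n\}_{n\ge1}\in X : x_1=2,\ x_i\ge 0\text{ for all } i\ge1\}.$$ If $T:A\cup B\to A\cup B$ is a cyclic relatively nonexpansive mapping, then there exists $(x,y)\in A\times B$ such that $\|x-Tx\|=\|y-Ty\|=\operatorname{dist}(A,B)$.
   Context: $\operatorname{dist}(A,B)=\inf\{\|x-y\|:x\in A,y\in B\}$. $T$ is relatively nonexpansive if $\|Tx-Ty\|\le\|x-y\|$ for all $x\in A$, $y\in B$, and cyclic if $T(A)\subseteq B$ and $T(B)\subseteq A$. *)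

(* Defs.v *)
From Stdlib Require Import Reals.
From Coquelicot Require Import Coquelicot.
Open Scope R_scope.

(* Real sequences; index 0 plays the role of the paper's x_1. *)
Definition seqR := nat -> R.

Definition in_l2 (x : seqR) : Prop := ex_series (fun n => (x n) ^ 2).

Definition norm_inf (x : seqR) : R := real (Sup_seq (fun n => Rabs (x n))).

Definition norm_2 (x : seqR) : R := sqrt (Series (fun n => (x n) ^ 2)).

Definition normX (x : seqR) : R := Rmax (norm_inf x) (norm_2 x / sqrt 2).

Definition vsub (x y : seqR) : seqR := fun n => x n - y n.

Definition origin : seqR := fun _ => 0.

Definition closed_ballX (r : R) (x : seqR) : Prop :=
  in_l2 x /\ normX (vsub x origin) <= r.

Definition setA (x : seqR) : Prop :=
  closed_ballX 1 x /\ x 0%nat = 1 /\ (forall i, 0 <= x i).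

Definition setB (x : seqR) : Prop :=
  closed_ballX 2 x /\ x 0%nat = 2 /\ (forall i, 0 <= x i).

Definition distX (A B : seqR -> Prop) : R :=
  real (Glb_Rbar (fun d => exists x y, A x /\ B y /\ d = normX (vsub x y))).

Definition cyclic_map (A B : seqR -> Prop) (T : seqR -> seqR) : Prop :=
  (forall x, A x -> B (T x)) /\ (forall y, B y -> A (T y)).

Definition rel_nonexpansive (A B : seqR -> Prop) (T : seqR -> seqR) : Prop :=
  forall x y, A x -> B y -> normX (vsub (T x) (T y)) <= normX (vsub x y).

(* Main.v *)
Require Import Defs.
From Stdlib Require Import Reals Lra.
From Coquelicot Require Import Coquelicot.
Open Scope R_scope.

Lemma sum_ge_term (a : nat -> R) (n : nat) :
  (forall k, 0 <= a k) -> a n <= sum_f_R0 a n.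
Proof.
  intros H. destruct n as [|m]; simpl; [lra|].
  pose proof (cond_pos_sum a m H). lra.
Qed.

Lemma l2_bound (x : seqR) : in_l2 x -> exists M, 0 <= M /\ forall n, Rabs (x n) <= M.
Proof.
  intros Hx. destruct (ex_series_Reals_0 _ Hx) as [l Hl].
  exists (1 + Rabs l). split; [pose proof (Rabs_pos l); lra|].
  intros n.
  assert (H1 : x n ^ 2 <= l).
  { apply Rle_trans with (sum_f_R0 (fun k => x k ^ 2) n).
    - apply (sum_ge_term (fun k => x k ^ 2)). intros k. apply pow2_ge_0.
    - apply sum_incr; auto. intros k; apply pow2_ge_0. }
  pose proof (Rle_abs l).
  assert (Rabs (x n) ^ 2 = x n ^ 2) by (rewrite pow2_abs; auto).
  pose proof (Rabs_pos (x n)). pose proof (Rabs_pos l). nra.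
Qed.

Lemma sup_props (u : nat -> R) (M : R) :
  (forall n, 0 <= u n <= M) ->
  (forall n, u n <= real (Sup_seq (fun n => Finite (u n)))) /\
  real (Sup_seq (fun n => Finite (u n))) <= M.
Proof.
  intros Hu. pose proof (Sup_seq_correct (fun n => Finite (u n))) as Hs.
  destruct (Sup_seq (fun n => Finite (u n))) as [s| |]; simpl in *.
  - split.
    + intros n. destruct (Rle_dec (u n) s) as [h|h]; auto.
      assert (he : 0 < u n - s) by lra.
      destruct (Hs (mkposreal _ he)) as [H1 _]. specialize (H1 n). simpl in H1. lra.
    + destruct (Rle_dec s M) as [h|h]; auto.
      assert (he : 0 < s - M) by lra.
      destruct (Hs (mkposreal _ he)) as [_ [n H1]]. simpl in H1.
      specialize (Hu n). lra.
  - exfalso. destruct (Hs M) as [n Hn]. specialize (Hu n). simpl in Hn. lra.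
  - exfalso. specialize (Hs (u 0%nat) 0%nat). simpl in Hs. lra.
Qed.

Lemma norm_inf_ge (x : seqR) (M : R) :
  (forall n, Rabs (x n) <= M) -> forall n, Rabs (x n) <= norm_inf x.
Proof.
  intros H n. unfold norm_inf.
  apply (sup_props (fun n => Rabs (x n)) M); auto.
  intros k; split; auto; apply Rabs_pos.
Qed.

Lemma normX_sym (a b : seqR) : normX (vsub a b) = normX (vsub b a).
Proof.
  unfold normX, norm_inf, norm_2, vsub.
  rewrite (Sup_seq_ext (fun n => Finite (Rabs (a n - b n))) (fun n => Finite (Rabs (b n - a n)))).
  2:{ intros n. rewrite Rabs_minus_sym. auto. }
  rewrite (Series_ext (fun n => (a n - b n) ^ 2) (fun n => (b n - a n) ^ 2)).
  2:{ intros n. ring. }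
  auto.
Qed.

Definition y0 : seqR := fun n => match n with O => 2 | _ => 0 end.

Lemma key (x : seqR) : setA x -> normX (vsub x y0) <= 1.
Proof.
  intros [[_ Hn] [H0 _]].
  replace (normX (vsub x y0)) with (normX (vsub x origin)); auto.
  unfold normX, norm_inf, norm_2, vsub, origin, y0.
  rewrite (Sup_seq_ext (fun n => Finite (Rabs (x n - 0)))
     (fun n => Finite (Rabs (x n - match n with O => 2 | _ => 0 end)))).
  2:{ intros [|n]; auto. rewrite H0. f_equal.
      rewrite (Rabs_pos_eq (1-0)) by lra; rewrite (Rabs_left (1-2)) by lra; lra. }
  rewrite (Series_ext (fun n => (x n - 0) ^ 2)
     (fun n => (x n - match n with O => 2 | _ => 0 end) ^ 2)).
  2:{ intros [|n]; auto. rewrite H0. ring. }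
  auto.
Qed.

Lemma zero_series : ex_series (fun _ : nat => 0).
Proof.
  exists 0. apply is_series_Reals. intros eps Heps. exists 0%nat. intros n _.
  rewrite sum_cte. unfold R_dist. rewrite Rmult_0_l, Rminus_0_r, Rabs_R0. auto.
Qed.

Lemma y0_B : setB y0.
Proof.
  assert (Hex : ex_series (fun n => (vsub y0 origin n) ^ 2)).
  { apply ex_series_incr_1.
    apply (ex_series_ext (fun _ => 0)); [|apply zero_series]. intros n. assert (E : 0 = (y0 (S n) - 0) ^ 2) by (unfold y0; ring). exact E. }
  split; [split|split; [reflexivity|]].
  - unfold in_l2. apply (ex_series_ext (fun n => (vsub y0 origin n) ^ 2)); [|exact Hex]. intros n. assert (E : (y0 n - 0) ^ 2 = y0 n ^ 2) by ring. exact E.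
  - unfold normX. apply Rmax_lub.
    + unfold norm_inf. apply (sup_props (fun n => Rabs (vsub y0 origin n)) 2).
      intros [|n]; unfold vsub, origin, y0; simpl.
      * replace (2-0) with 2 by lra. rewrite Rabs_pos_eq; lra.
      * replace (0-0) with 0 by lra. rewrite Rabs_R0; lra.
    + unfold norm_2. rewrite Series_incr_1; auto.
      rewrite (Series_ext _ (fun n => 0 * 1)).
      2:{ intros n. unfold vsub, origin, y0. ring. }
      rewrite (Series_scal_l 0 (fun _ => 1)). unfold vsub, origin, y0.
      replace ((2 - 0) ^ 2 + 0 * Series (fun _ : nat => 1)) with (2 * 2) by ring.
      rewrite sqrt_square by lra.
      assert (1 <= sqrt 2).
      { rewrite <- sqrt_1. apply sqrt_le_1; lra. }
      apply Rle_trans with (2 / 1).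
      * unfold Rdiv. apply Rmult_le_compat_l; [lra|]. rewrite Rinv_1.
        rewrite <- Rinv_1. apply Rinv_le_contravar; lra.
      * lra.
  - intros [|n]; simpl; lra.
Qed.

Lemma lower (x y : seqR) : setA x -> setB y -> 1 <= normX (vsub x y).
Proof.
  intros [[Hx _] [Hx0 _]] [[Hy _] [Hy0 _]].
  destruct (l2_bound x Hx) as [Mx [_ HMx]]. destruct (l2_bound y Hy) as [My [_ HMy]].
  unfold normX. apply Rle_trans with (norm_inf (vsub x y)); [|apply Rmax_l].
  apply Rle_trans with (Rabs (vsub x y 0%nat)).
  - unfold vsub. rewrite Hx0, Hy0. rewrite (Rabs_left (1-2)) by lra; lra.
  - apply (norm_inf_ge _ (Mx + My)). intros n. unfold vsub.
    unfold Rminus. eapply Rle_trans; [apply Rabs_triang|]. rewrite Rabs_Ropp.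
    specialize (HMx n); specialize (HMy n); lra.
Qed.

Theorem mainTheorem12 (T : seqR -> seqR) :
  cyclic_map setA setB T ->
  rel_nonexpansive setA setB T ->
  exists x y, setA x /\ setB y /\
    normX (vsub x (T x)) = distX setA setB /\
    normX (vsub y (T y)) = distX setA setB.
Proof.
  intros [HAB HBA] Hne.
  set (p := T y0).
  assert (Hp : setA p) by (apply HBA; apply y0_B).
  assert (HTp : setB (T p)) by (apply HAB; auto).
  assert (E1 : normX (vsub p (T p)) = 1).
  { apply Rle_antisym; [|apply lower; auto].
    rewrite normX_sym. eapply Rle_trans; [apply Hne; auto; apply y0_B|].
    apply key; auto. }
  assert (Hd : distX setA setB = 1).
  { unfold distX.
    set (E := fun d => exists x y, setA x /\ setB y /\ d = normX (vsub x y)).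
    assert (Hg : Glb_Rbar E = Finite 1).
    { destruct (Glb_Rbar_correct E) as [Hlb Hglb].
      apply Rbar_le_antisym.
      - apply Hlb. exists p, (T p). auto.
      - apply Hglb. intros d [x [y [Hx [Hy ->]]]]. simpl. apply lower; auto. }
    rewrite Hg. reflexivity. }
  exists p, (T p). split; [auto|]. split; [auto|].
  rewrite Hd. split; auto.
  apply Rle_antisym.
  - rewrite <- E1. apply Hne; auto.
  - rewrite normX_sym. apply lower; auto.
Qed.
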